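(* Let $S$ and $T$ be semigroups. If $S\times T$ is finitely right equated, then so are $S$ and $T$.
   Context: For a semigroup $S$ and $a\in S$, $\mathbf{r}_S(a)=\{(s,t)\in S\times S\mid as=at\}$; $S$ is finitely right equated if each $\mathbf{r}_S(a)$ is finitely generated as a right congruence. *)

(* Defs.v *)
From Stdlib Require Import List.

Definition associative_op {S : Type} (mul : S -> S -> S) : Prop :=
  forall x y z, mul x (mul y z) = mul (mul x y) z.

Definition prod_op {S T : Type} (mulS : S -> S -> S) (mulT : T -> T -> T)
  (p q : S * T) : S * T := (mulS (fst p) (fst q), mulT (snd p) (snd q)).

Definition right_congruence {S : Type} (mul : S -> S -> S) (rho : S -> S -> Prop) : Prop :=
  (forall s, rho s s) /\
  (forall s t, rho s t -> rho t s) /\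
  (forall s t u, rho s t -> rho t u -> rho s u) /\
  (forall s t u, rho s t -> rho (mul s u) (mul t u)).

Definition gen_right_congruence {S : Type} (mul : S -> S -> S) (X : list (S * S))
  (s t : S) : Prop :=
  forall rho, right_congruence mul rho ->
    (forall p, In p X -> rho (fst p) (snd p)) -> rho s t.

Definition fg_right_congruence {S : Type} (mul : S -> S -> S) (rho : S -> S -> Prop) : Prop :=
  exists X : list (S * S), forall s t, rho s t <-> gen_right_congruence mul X s t.

Definition r_ann {S : Type} (mul : S -> S -> S) (a : S) (s t : S) : Prop :=
  mul a s = mul a t.

Definition finitely_right_equated {S : Type} (mul : S -> S -> S) : Prop :=
  forall a, fg_right_congruence mul (r_ann mul a).

(* Main.v *)
Require Import Defs.
From Stdlib Require Import List.

Lemma r_ann_rc {S : Type} (mul : S -> S -> S) (h : associative_op mul) a :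
  right_congruence mul (r_ann mul a).
Proof.
  unfold r_ann; repeat split.
  - intros s t H; now rewrite H.
  - intros s t u H1 H2; now rewrite H1.
  - intros s t u H. rewrite !h, H. reflexivity.
Qed.

Lemma gen_in {S : Type} (mul : S -> S -> S) X p :
  In p X -> gen_right_congruence mul X (fst p) (snd p).
Proof. intros Hp rho _ HX. now apply HX. Qed.

Lemma part1 (S T : Type) (mulS : S -> S -> S) (mulT : T -> T -> T)
  (hS : associative_op mulS) (t0 : T) :
  finitely_right_equated (prod_op mulS mulT) -> finitely_right_equated mulS.
Proof.
  intros H a. destruct (H (a, t0)) as [X HX].
  exists (map (fun pq => (fst (fst pq), fst (snd pq))) X).
  intros s s'. split.
  - intros Hs.
    assert (Hg : gen_right_congruence (prod_op mulS mulT) X (s, t0) (s', t0)).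
    { apply HX. unfold r_ann, prod_op; simpl. now rewrite Hs. }
    apply (Hg (fun p q => gen_right_congruence mulS
             (map (fun pq => (fst (fst pq), fst (snd pq))) X) (fst p) (fst q))).
    + repeat split.
      * intros p rho Hr HXr. pose proof Hr as [R1 _]. apply R1.
      * intros p q Hpq rho Hr HXr. pose proof Hr as [R1 [R2 _]]. apply R2. apply Hpq; assumption.
      * intros p q r Hpq Hqr rho Hr HXr. pose proof Hr as [R1 [R2 [R3 _]]].
        apply (R3 _ (fst q)); [apply Hpq; assumption | apply Hqr; assumption].
      * intros p q u Hpq rho Hr HXr. pose proof Hr as [R1 [R2 [R3 R4]]].
        simpl. apply R4. apply Hpq; assumption.
    + intros p Hp. apply (gen_in mulS _ (fst (fst p), fst (snd p))).
      apply (in_map (fun pq => (fst (fst pq), fst (snd pq))) X p Hp).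
  - intros Hg. apply (Hg (r_ann mulS a) (r_ann_rc mulS hS a)).
    intros p Hp. apply in_map_iff in Hp. destruct Hp as [pq [<- Hin]].
    pose proof (proj2 (HX (fst pq) (snd pq)) (gen_in _ X pq Hin)) as E.
    unfold r_ann, prod_op in E. simpl in E. injection E. intros _ E1. exact E1.
Qed.

Lemma part2 (S T : Type) (mulS : S -> S -> S) (mulT : T -> T -> T)
  (hT : associative_op mulT) (s0 : S) :
  finitely_right_equated (prod_op mulS mulT) -> finitely_right_equated mulT.
Proof.
  intros H a. destruct (H (s0, a)) as [X HX].
  exists (map (fun pq => (snd (fst pq), snd (snd pq))) X).
  intros s s'. split.
  - intros Hs.
    assert (Hg : gen_right_congruence (prod_op mulS mulT) X (s0, s) (s0, s')).
    { apply HX. unfold r_ann, prod_op; simpl. now rewrite Hs. }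
    apply (Hg (fun p q => gen_right_congruence mulT
             (map (fun pq => (snd (fst pq), snd (snd pq))) X) (snd p) (snd q))).
    + repeat split.
      * intros p rho Hr HXr. pose proof Hr as [R1 _]. apply R1.
      * intros p q Hpq rho Hr HXr. pose proof Hr as [R1 [R2 _]]. apply R2. apply Hpq; assumption.
      * intros p q r Hpq Hqr rho Hr HXr. pose proof Hr as [R1 [R2 [R3 _]]].
        apply (R3 _ (snd q)); [apply Hpq; assumption | apply Hqr; assumption].
      * intros p q u Hpq rho Hr HXr. pose proof Hr as [R1 [R2 [R3 R4]]].
        simpl. apply R4. apply Hpq; assumption.
    + intros p Hp. apply (gen_in mulT _ (snd (fst p), snd (snd p))).
      apply (in_map (fun pq => (snd (fst pq), snd (snd pq))) X p Hp).
  - intros Hg. apply (Hg (r_ann mulT a) (r_ann_rc mulT hT a)).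
    intros p Hp. apply in_map_iff in Hp. destruct Hp as [pq [<- Hin]].
    pose proof (proj2 (HX (fst pq) (snd pq)) (gen_in _ X pq Hin)) as E.
    unfold r_ann, prod_op in E. simpl in E. injection E. intros E1 _. exact E1.
Qed.

Theorem mainTheorem17 (S T : Type) (mulS : S -> S -> S) (mulT : T -> T -> T)
  (hS : associative_op mulS) (hT : associative_op mulT)
  (neS : inhabited S) (neT : inhabited T) :
  finitely_right_equated (prod_op mulS mulT) ->
  finitely_right_equated mulS /\ finitely_right_equated mulT.
Proof.
  intros H. destruct neS as [s0]. destruct neT as [t0]. split.
  - exact (part1 S T mulS mulT hS t0 H).
  - exact (part2 S T mulS mulT hT s0 H).
Qed.
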